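(* Let $X$ be a Stone space and $G$ a topological subgroup of $\mathrm{Homeo}(X)$. Then: (1) the action $\alpha:G\times V\to V$, $\alpha(g,A)=g(A)$, induces a topological group embedding $i_\alpha:G\hookrightarrow \mathrm{Aut}(V)$; (2) the evaluation map $\delta:X\to V^*$, $x\mapsto\delta_x$, $\delta_x(f)=f(x)$, is a topological embedding which is $G$-equivariant (with respect to the action $\beta$ below); (3) the action $\beta:G\times V^*\to V^*$, $(gf)(A)=f(g^{-1}(A))$, is continuous and induces a topological group embedding $i_\beta:G\hookrightarrow\mathrm{Aut}(V^* )$; (4) the pair $\psi=(\alpha,\beta)$ is a $t$-exact birepresentation of $G$ on the evaluation map $w:V\times V^*\to\mathbb{Z}_2$, $w(A,f)=f(A)$.
   Context: A Stone space is a compact zero-dimensional Hausdorff space; $\mathrm{Homeo}(X)$ carries the compact-open topology. $V=C(X,\mathbb{Z}_2)$, identified with the group of clopen subsets of $X$ under symmetric difference, is discrete; $V^*=\mathrm{Hom}(V,\mathbb{Z}_2)$ carries the topology of pointwise convergence (compact). For a locally compact group $Y$, $\mathrm{Aut}(Y)$ carries the Birkhoff topology, with local base at the identity the sets $\{f\in\mathrm{Aut}(Y): f(y)\in Oy,\ f^{-1}(y)\in Oy\ \forall y\in K\}$ ($K$ compact, $O$ a neighborhood of the identity); for discrete $Y$ it is the pointwise topology and for compact $Y$ the compact-open topology. Given a continuous biadditive map $w:E\times F\to A$ of abelian topological groups, a continuous birepresentation of a topological group $G$ on $w$ is a pair $(\alpha_1,\alpha_2)$ of continuous actions of $G$ by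 automorphisms on $E$ and on $F$ with $w(gx,gf)=w(x,f)$. It is $t$-exact if $\ker\alpha_1\cap\ker\alpha_2=\{e\}$ and for no strictly coarser Hausdorff group topology on $G$ do both actions remain continuous. *)

(* Defs.v *)
From Stdlib Require Import List.

Definition set (X : Type) := X -> Prop.
Definition topology (X : Type) := set (set X).

Definition is_topology {X} (T : topology X) : Prop :=
  T (fun _ => True) /\
  (forall U W, T U -> T W -> T (fun x => U x /\ W x)) /\
  (forall F : set (set X), (forall U, F U -> T U) ->
     T (fun x => exists U, F U /\ U x)).

Definition continuous {X Y} (TX : topology X) (TY : topology Y) (f : X -> Y) :=
  forall W, TY W -> TX (fun x => W (f x)).

Definition hausdorff {X} (T : topology X) :=
  forall x y : X, x <> y ->
    exists U W, T U /\ T W /\ U x /\ W y /\ forall z, ~ (U z /\ W z).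

Definition compact_set {X} (T : topology X) (K : set X) :=
  forall F : set (set X), (forall U, F U -> T U) ->
    (forall x, K x -> exists U, F U /\ U x) ->
    exists l : list (set X), (forall U, In U l -> F U) /\
      (forall x, K x -> exists U, In U l /\ U x).

Definition compact {X} (T : topology X) := compact_set T (fun _ => True).

Definition clopen {X} (T : topology X) (A : set X) := T A /\ T (fun x => ~ A x).

Definition zero_dimensional {X} (T : topology X) :=
  forall U x, T U -> U x ->
    exists A, clopen T A /\ A x /\ forall y, A y -> U y.

Definition stone_space {X} (T : topology X) :=
  is_topology T /\ compact T /\ hausdorff T /\ zero_dimensional T.

Definition generated {X} (S : set (set X)) : topology X := fun U =>
  forall x, U x -> exists l : list (set X),
    (forall B, In B l -> S B) /\ (forall B, In B l -> B x) /\
    (forall y, (forall B, In B l -> B y) -> U y).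

Definition discrete (X : Type) : topology X := fun _ => True.

Definition subspace {Y} (S : set Y) (T : topology Y) : topology Y := fun U =>
  (forall y, U y -> S y) /\ exists W, T W /\ forall y, S y -> (U y <-> W y).

Definition topology_on {Y} (S : set Y) (T : topology Y) :=
  (forall U, T U -> forall y, U y -> S y) /\ T S /\
  (forall U W, T U -> T W -> T (fun x => U x /\ W x)) /\
  (forall F : set (set Y), (forall U, F U -> T U) ->
     T (fun x => exists U, F U /\ U x)).

Definition hausdorff_on {Y} (S : set Y) (T : topology Y) :=
  forall x y, S x -> S y -> x <> y ->
    exists U W, T U /\ T W /\ U x /\ W y /\ forall z, ~ (U z /\ W z).

Definition prod_open {A B} (TA : topology A) (TB : topology B) (W : A -> B -> Prop) :=
  forall a b, W a b -> exists U1 U2, TA U1 /\ TB U2 /\ U1 a /\ U2 b /\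
    forall x y, U1 x -> U2 y -> W x y.

(* a homeomorphism is represented by the pair (h, h^{-1}) *)
Definition HX (X : Type) := ((X -> X) * (X -> X))%type.
Definition idH {X} : HX X := (fun x => x, fun x => x).
Definition mulH {X} (p q : HX X) : HX X :=
  (fun x => fst p (fst q x), fun x => snd q (snd p x)).
Definition invH {X} (p : HX X) : HX X := (snd p, fst p).

Definition is_homeo {X} (T : topology X) (p : HX X) :=
  (forall x, fst p (snd p x) = x) /\ (forall x, snd p (fst p x) = x) /\
  continuous T T (fst p) /\ continuous T T (snd p).

Definition compact_open {X} (T : topology X) : topology (HX X) :=
  generated (fun B => exists K U, compact_set T K /\ T U /\
    forall p, B p <-> (forall x, K x -> U (fst p x))).

Definition Homeo_top {X} (T : topology X) : topology (HX X) :=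
  subspace (is_homeo T) (compact_open T).

Definition is_subgroup {X} (T : topology X) (G : set (HX X)) :=
  (forall p, G p -> is_homeo T p) /\ G idH /\
  (forall p q, G p -> G q -> G (mulH p q)) /\ (forall p, G p -> G (invH p)).

Definition G_top {X} (T : topology X) (G : set (HX X)) : topology (HX X) :=
  subspace G (Homeo_top T).

Definition group_topology_on {X} (G : set (HX X)) (tau : topology (HX X)) :=
  topology_on G tau /\
  (forall U, tau U -> prod_open tau tau (fun a b => G a /\ G b /\ U (mulH a b))) /\
  (forall U, tau U -> tau (fun a => G a /\ U (invH a))).

(* Z2 = bool with xorb *)
Definition V {X} (T : topology X) := {A : X -> bool | clopen T (fun x => A x = true)}.
(* c = a + b in V *)
Definition addV {X} {T : topology X} (a b c : V T) :=
  forall x, proj1_sig c x = xorb (proj1_sig a x) (proj1_sig b x).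
Definition zeroV {X} {T : topology X} (a : V T) := forall x, proj1_sig a x = false.
Definition V_top {X} (T : topology X) : topology (V T) := fun _ => True.

Definition Vs {X} (T : topology X) :=
  {f : V T -> bool | forall a b c, addV a b c -> f c = xorb (f a) (f b)}.
Definition addVs {X} {T : topology X} (a b c : Vs T) :=
  forall A, proj1_sig c A = xorb (proj1_sig a A) (proj1_sig b A).
Definition zeroVs {X} {T : topology X} (a : Vs T) := forall A, proj1_sig a A = false.
Definition Vs_top {X} (T : topology X) : topology (Vs T) :=
  generated (fun B => exists (A : V T) (b : bool),
    forall f : Vs T, B f <-> proj1_sig f A = b).

Definition wpair {X} {T : topology X} (A : V T) (f : Vs T) : bool := proj1_sig f A.

(* addR a b c  means  c = a + b *)
Definition is_hom {Y} (addR : Y -> Y -> Y -> Prop) (phi : Y -> Y) :=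
  forall a b c, addR a b c -> addR (phi a) (phi b) (phi c).

Definition Aut {Y} (TY : topology Y) (addR : Y -> Y -> Y -> Prop) :=
  {p : (Y -> Y) * (Y -> Y) |
    (forall y, fst p (snd p y) = y) /\ (forall y, snd p (fst p y) = y) /\
    is_hom addR (fst p) /\ is_hom addR (snd p) /\
    continuous TY TY (fst p) /\ continuous TY TY (snd p)}.
Definition autf {Y} {TY : topology Y} {addR} (f : Aut TY addR) := fst (proj1_sig f).
Definition autg {Y} {TY : topology Y} {addR} (f : Aut TY addR) := snd (proj1_sig f).

Definition nbhd {Y} (TY : topology Y) (P : set Y) (O : set Y) :=
  exists U, TY U /\ (forall z, P z -> U z) /\ forall y, U y -> O y.

(* Birkhoff topology: U open iff for every f in U some basic neighbourhood
   f N(K,O) is contained in U, where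
   N(K,O) = {h | h(y) in O+y, h^{-1}(y) in O+y for all y in K}. *)
Definition birkhoff {Y} (TY : topology Y) (addR : Y -> Y -> Y -> Prop)
    (zeroP : set Y) : topology (Aut TY addR) := fun U =>
  forall f, U f -> exists K O, compact_set TY K /\ nbhd TY zeroP O /\
    forall k : Aut TY addR,
      (forall y, K y ->
         (exists o, O o /\ addR o y (autg f (autf k y))) /\
         (exists o, O o /\ addR o y (autg k (autf f y)))) -> U k.

Definition top_group_embedding {X} (G : set (HX X)) (TG : topology (HX X))
    {Y} {TY : topology Y} {addR} (TA : topology (Aut TY addR))
    (i : HX X -> Aut TY addR) :=
  (forall g h, G g -> G h -> forall y,
      autf (i (mulH g h)) y = autf (i g) (autf (i h) y)) /\
  (forall g h, G g -> G h -> i g = i h -> g = h) /\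
  (forall W, TA W -> TG (fun g => G g /\ W (i g))) /\
  (forall U, TG U -> exists W, TA W /\ forall g, G g -> (U g <-> W (i g))).

Definition top_embedding {X Y} (TX : topology X) (TY : topology Y) (d : X -> Y) :=
  (forall x y, d x = d y -> x = y) /\ continuous TX TY d /\
  (forall U, TX U -> exists W, TY W /\ forall x, U x <-> W (d x)).

Definition action_continuous {X} (G : set (HX X)) (TG : topology (HX X))
    {Y} (TY : topology Y) (act : HX X -> Y -> Y) :=
  forall W, TY W -> prod_open TG TY (fun g y => G g /\ W (act g y)).

Definition action_by_automorphisms {X} (G : set (HX X)) {Y} (TY : topology Y)
    (addR : Y -> Y -> Y -> Prop) (act : HX X -> Y -> Y) :=
  (forall y, act idH y = y) /\
  (forall g h y, G g -> G h -> act (mulH g h) y = act g (act h y)) /\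
  (forall g, G g -> is_hom addR (act g) /\ continuous TY TY (act g)).

Definition birepresentation {X} (G : set (HX X)) (TG : topology (HX X))
    {E F} (TE : topology E) (TF : topology F) addE addF
    (w : E -> F -> bool) (a1 : HX X -> E -> E) (a2 : HX X -> F -> F) :=
  action_by_automorphisms G TE addE a1 /\ action_by_automorphisms G TF addF a2 /\
  action_continuous G TG TE a1 /\ action_continuous G TG TF a2 /\
  (forall g x f, G g -> w (a1 g x) (a2 g f) = w x f).

Definition t_exact_birepresentation {X} (G : set (HX X)) (TG : topology (HX X))
    {E F} (TE : topology E) (TF : topology F) addE addF
    (w : E -> F -> bool) (a1 : HX X -> E -> E) (a2 : HX X -> F -> F) :=
  birepresentation G TG TE TF addE addF w a1 a2 /\
  (forall g, G g -> (forall x, a1 g x = x) -> (forall f, a2 g f = f) -> g = idH) /\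
  (forall tau, group_topology_on G tau -> hausdorff_on G tau ->
     (forall U, tau U -> TG U) -> (exists U, TG U /\ ~ tau U) ->
     ~ (action_continuous G tau TE a1 /\ action_continuous G tau TF a2)).

(* Main.v *)
Require Import Defs.
From Stdlib Require Import List Classical ClassicalEpsilon FunctionalExtensionality PropExtensionality ProofIrrelevance.
Import ListNotations.

Lemma set_ext {X} (A B : set X) : (forall x, A x <-> B x) -> A = B.
Proof. intro H. apply functional_extensionality; intro x. apply propositional_extensionality; auto. Qed.

Lemma T_ext {X} (T : topology X) (A B : set X) : (forall x, A x <-> B x) -> T A -> T B.
Proof. intros H HA. rewrite <- (set_ext A B H). exact HA. Qed.

Lemma open_local {X} (T : topology X) : is_topology T -> forall P : set X,
  (forall x, P x -> exists U, T U /\ U x /\ forall y, U y -> P y) -> T P.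
Proof.
  intros [_ [_ Hu]] P H.
  apply (T_ext T (fun x => exists U, (T U /\ forall y, U y -> P y) /\ U x)).
  - intro x; split.
    + intros [U [[_ HU] Ux]]. auto.
    + intro Px. destruct (H x Px) as [U [TU [Ux HU]]]. exists U; auto.
  - apply Hu. intros U [TU _]; exact TU.
Qed.

Lemma empty_open {X} (T : topology X) : is_topology T -> T (fun _ => False).
Proof. intro HT. apply open_local; auto. intros x []. Qed.

Lemma V_ext {X} {T : topology X} (a b : V T) : (forall x, proj1_sig a x = proj1_sig b x) -> a = b.
Proof.
  destruct a as [a Ha], b as [b Hb]; simpl; intro H.
  assert (a = b) by (apply functional_extensionality; auto). subst.
  f_equal. apply proof_irrelevance.
Qed.

Lemma Vs_ext {X} {T : topology X} (a b : Vs T) : (forall A, proj1_sig a A = proj1_sig b A) -> a = b.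
Proof.
  destruct a as [a Ha], b as [b Hb]; simpl; intro H.
  assert (a = b) by (apply functional_extensionality; auto). subst.
  f_equal. apply proof_irrelevance.
Qed.

Definition dec (P : Prop) : bool := if excluded_middle_informative P then true else false.
Lemma dec_true (P : Prop) : dec P = true <-> P.
Proof. unfold dec; destruct (excluded_middle_informative P); split; intuition congruence. Qed.

Lemma clopen_dec {X} (T : topology X) (P : set X) : clopen T P -> clopen T (fun x => dec (P x) = true).
Proof.
  intros [H1 H2]. split.
  - eapply T_ext; [|exact H1]. intro x; rewrite dec_true; tauto.
  - eapply T_ext; [|exact H2]. intro x; rewrite dec_true; tauto.
Qed.

Definition toV {X} (T : topology X) (P : set X) (H : clopen T P) : V T :=
  exist _ (fun x => dec (P x)) (clopen_dec T P H).

Lemma toV_val {X} (T : topology X) P H x : proj1_sig (toV T P H) x = true <-> P x.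
Proof. simpl. apply dec_true. Qed.

Lemma list_choice {A B} (R : A -> B -> Prop) (l : list A) :
  (forall a, In a l -> exists b, R a b) ->
  exists lb, (forall a, In a l -> exists b, In b lb /\ R a b) /\
             (forall b, In b lb -> exists a, In a l /\ R a b).
Proof.
  induction l as [|a l IH]; intro H.
  - exists []. split; intros ? [].
  - destruct (H a (or_introl eq_refl)) as [b Hb].
    destruct IH as [lb [H1 H2]]. { intros; apply H; right; auto. }
    exists (b :: lb). split.
    + intros a' [<-|Ha']. * exists b; simpl; auto. * destruct (H1 a' Ha') as [b' [? ?]]. exists b'; simpl; auto.
    + intros b' [<-|Hb']. * exists a; simpl; auto. * destruct (H2 b' Hb') as [a' [? ?]]. exists a'; simpl; auto.
Qed.

Lemma fin_compact {X} (T : topology X) (K : set X) (L : list X) :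
  (forall y, K y -> In y L) -> compact_set T K.
Proof.
  intros HK F HF Hc.
  assert (H : forall y, In y (filter (fun y => dec (K y)) L) -> exists U, F U /\ U y).
  { intros y Hy. apply filter_In in Hy. destruct Hy as [_ Hy]. apply (proj1 (dec_true _)) in Hy. apply Hc; exact Hy. }
  destruct (list_choice (fun y U => F U /\ U y) _ H) as [lU [H1 H2]].
  exists lU. split.
  - intros U HU. destruct (H2 U HU) as [a [_ [? _]]]; auto.
  - intros x Kx. destruct (H1 x) as [U [? [? ?]]].
    + apply filter_In; split; auto. apply dec_true; auto.
    + exists U; auto.
Qed.
Lemma open_fin_inter {X} (T : topology X) : is_topology T -> forall l : list (set X),
  (forall C, In C l -> T C) -> T (fun x => forall C, In C l -> C x).
Proof.
  intros HT l. induction l as [|C l IH]; intro H.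
  - eapply T_ext; [|exact (proj1 HT)]. intro x; simpl; tauto.
  - eapply T_ext; [|apply (proj1 (proj2 HT)) with (U := C) (W := fun x => forall C, In C l -> C x)].
    + intro x; simpl; split.
      * intros [H1 H2] C' [HC|HC]; [subst; auto | apply H2; exact HC].
      * intro H'; split; [apply H'; left; reflexivity | intros; apply H'; right; assumption].
    + apply H; simpl; auto.
    + apply IH; intros; apply H; simpl; auto.
Qed.

Lemma clopen_union_list {X} (T : topology X) : is_topology T -> forall l : list (set X),
  (forall C, In C l -> clopen T C) -> clopen T (fun x => exists C, In C l /\ C x).
Proof.
  intros HT l H. split.
  - apply (proj2 (proj2 HT)). intros U HU; apply (H U HU).
  - eapply T_ext; [|apply (open_fin_inter T HT (map (fun C x => ~ C x) l))].
    + intro x; split.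
      * intros H1 [C [HC Cx]]. apply (H1 (fun x => ~ C x)); auto. apply in_map_iff; eauto.
      * intros H1 C' HC'. apply in_map_iff in HC'. destruct HC' as [C [<- HC]]. intro Cx; apply H1; eauto.
    + intros C' HC'. apply in_map_iff in HC'. destruct HC' as [C [<- HC]]. apply (H C HC).
Qed.

Lemma clopen_between {X} (T : topology X) : stone_space T -> forall K P,
  compact_set T K -> T P -> (forall x, K x -> P x) ->
  exists B, clopen T B /\ (forall x, K x -> B x) /\ (forall x, B x -> P x).
Proof.
  intros [HT [_ [_ HZ]]] K P HK HP HKP.
  destruct (HK (fun C => clopen T C /\ forall y, C y -> P y)) as [l [Hl1 Hl2]].
  - intros U [[? _] _]; auto.
  - intros x Kx. destruct (HZ P x HP (HKP x Kx)) as [A [? [? ?]]]. exists A; auto.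
  - exists (fun x => exists C, In C l /\ C x). split; [|split].
    + apply clopen_union_list; auto. intros C HC; apply Hl1; auto.
    + intros x Kx. destruct (Hl2 x Kx) as [C [? ?]]; eauto.
    + intros x [C [HC Cx]]. apply (proj2 (Hl1 C HC)); auto.
Qed.

Lemma clopen_compact {X} (T : topology X) : stone_space T -> forall B,
  clopen T B -> compact_set T B.
Proof.
  intros [HT [HC _]] B [HB1 HB2] F HF Hcov.
  destruct (HC (fun U => F U \/ U = (fun x => ~ B x))) as [l [Hl1 Hl2]].
  - intros U [HU| ->]; auto.
  - intros x _. destruct (classic (B x)) as [Bx|Bx].
    + destruct (Hcov x Bx) as [U [? ?]]; eauto.
    + exists (fun x => ~ B x); auto.
  - exists (filter (fun U => dec (F U)) l). split.
    + intros U HU. apply filter_In in HU. apply (proj1 (dec_true _)). apply HU.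
    + intros x Bx. destruct (Hl2 x I) as [U [HU Ux]]. exists U; split; auto.
      apply filter_In; split; auto. apply dec_true.
      destruct (Hl1 U HU) as [?| ->]; auto. contradiction.
Qed.

Lemma separation {X} (T : topology X) : stone_space T -> forall x y, x <> y ->
  exists A : V T, proj1_sig A x = true /\ proj1_sig A y = false.
Proof.
  intros HS x y Hxy. destruct HS as [HT [HC [HH HZ]]].
  destruct (HH x y Hxy) as [U [W [TU [TW [Ux [Wy Hd]]]]]].
  destruct (HZ U x TU Ux) as [C [HCl [Cx HCU]]].
  exists (toV T C HCl). split.
  - apply toV_val; auto.
  - destruct (proj1_sig (toV T C HCl) y) eqn:E; auto.
    apply toV_val in E. exfalso; apply (Hd y); auto.
Qed.
Lemma clopen_pre {X} (T : topology X) (g : HX X) (A : V T) : is_homeo T g ->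
  clopen T (fun x => proj1_sig A (snd g x) = true).
Proof.
  intros [_ [_ [_ Hc]]]. destruct A as [A [H1 H2]]; simpl. split.
  - apply (Hc _ H1).
  - apply (Hc _ H2).
Qed.

Definition alphaF {X} (T : topology X) (g : HX X) (A : V T) : V T :=
  match excluded_middle_informative (is_homeo T g) with
  | left H => exist _ (fun x => proj1_sig A (snd g x)) (clopen_pre T g A H)
  | right _ => A end.

Lemma alpha_val {X} (T : topology X) g A x : is_homeo T g ->
  proj1_sig (alphaF T g A) x = proj1_sig A (snd g x).
Proof. intro H. unfold alphaF. destruct (excluded_middle_informative (is_homeo T g)); simpl; tauto. Qed.

Lemma alpha_hom {X} (T : topology X) g : is_hom addV (alphaF T g).
Proof.
  intros a b c H. unfold alphaF. destruct (excluded_middle_informative (is_homeo T g)); simpl; auto.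
  intro x; simpl. apply H.
Qed.

Lemma homeo_inv {X} (T : topology X) g : is_homeo T g -> is_homeo T (invH g).
Proof. intros [? [? [? ?]]]; unfold invH; repeat split; simpl; auto. Qed.

Lemma homeo_mul {X} (T : topology X) g h : is_homeo T g -> is_homeo T h -> is_homeo T (mulH g h).
Proof.
  intros [g1 [g2 [g3 g4]]] [h1 [h2 [h3 h4]]]; unfold mulH; repeat split; simpl.
  - intro x; rewrite h1; auto.
  - intro x; rewrite g2; auto.
  - intros W HW. apply (h3 _ (g3 _ HW)).
  - intros W HW. apply (g4 _ (h4 _ HW)).
Qed.

Lemma homeo_id {X} (T : topology X) : is_homeo T idH.
Proof. unfold idH; repeat split; simpl; auto; intros W HW; exact HW. Qed.

Lemma invH_invH {X} (g : HX X) : invH (invH g) = g.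
Proof. destruct g; reflexivity. Qed.

Lemma alpha_mul {X} (T : topology X) g h A : is_homeo T g -> is_homeo T h ->
  alphaF T (mulH g h) A = alphaF T g (alphaF T h A).
Proof.
  intros Hg Hh. apply V_ext; intro x.
  rewrite (alpha_val _ _ _ _ (homeo_mul _ _ _ Hg Hh)), !alpha_val; auto.
Qed.

Lemma alpha_invl {X} (T : topology X) g A : is_homeo T g ->
  alphaF T (invH g) (alphaF T g A) = A.
Proof.
  intros Hg. apply V_ext; intro x.
  rewrite (alpha_val _ _ _ _ (homeo_inv _ _ Hg)), alpha_val; auto. simpl. f_equal. apply Hg.
Qed.

Lemma alpha_invr {X} (T : topology X) g A : is_homeo T g ->
  alphaF T g (alphaF T (invH g) A) = A.
Proof.
  intros Hg. pose proof (alpha_invl T (invH g) A (homeo_inv _ _ Hg)). rewrite invH_invH in H. exact H.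
Qed.

Lemma alpha_id {X} (T : topology X) A : alphaF T idH A = A.
Proof. apply V_ext; intro x. rewrite alpha_val by apply homeo_id. reflexivity. Qed.

Lemma beta_proof {X} (T : topology X) g (f : Vs T) :
  forall a b c, addV a b c -> proj1_sig f (alphaF T (invH g) c) =
     xorb (proj1_sig f (alphaF T (invH g) a)) (proj1_sig f (alphaF T (invH g) b)).
Proof. intros a b c H. destruct f as [f Hf]; simpl. apply Hf. apply alpha_hom; auto. Qed.

Definition betaF {X} (T : topology X) (g : HX X) (f : Vs T) : Vs T :=
  match excluded_middle_informative (is_homeo T g) with
  | left H => exist _ (fun A => proj1_sig f (alphaF T (invH g) A)) (beta_proof T g f)
  | right _ => f end.

Lemma beta_val {X} (T : topology X) g f A : is_homeo T g ->
  proj1_sig (betaF T g f) A = proj1_sig f (alphaF T (invH g) A).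
Proof. intro H. unfold betaF. destruct (excluded_middle_informative (is_homeo T g)); simpl; tauto. Qed.

Lemma beta_hom {X} (T : topology X) g : is_hom addVs (betaF T g).
Proof.
  intros a b c H. unfold betaF. destruct (excluded_middle_informative (is_homeo T g)); simpl; auto.
  intro A; simpl. apply H.
Qed.

Lemma beta_mul {X} (T : topology X) g h f : is_homeo T g -> is_homeo T h ->
  betaF T (mulH g h) f = betaF T g (betaF T h f).
Proof.
  intros Hg Hh. apply Vs_ext; intro A.
  rewrite (beta_val _ _ _ _ (homeo_mul _ _ _ Hg Hh)), !beta_val; auto.
  f_equal. change (invH (mulH g h)) with (mulH (invH h) (invH g)).
  apply alpha_mul; apply homeo_inv; auto.
Qed.

Lemma beta_invl {X} (T : topology X) g f : is_homeo T g ->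
  betaF T (invH g) (betaF T g f) = f.
Proof.
  intros Hg. apply Vs_ext; intro A.
  rewrite (beta_val _ _ _ _ (homeo_inv _ _ Hg)), beta_val; auto. rewrite invH_invH.
  f_equal. apply alpha_invl; auto.
Qed.

Lemma beta_invr {X} (T : topology X) g f : is_homeo T g ->
  betaF T g (betaF T (invH g) f) = f.
Proof.
  intros Hg. pose proof (beta_invl T (invH g) f (homeo_inv _ _ Hg)). rewrite invH_invH in H. exact H.
Qed.

Lemma beta_id {X} (T : topology X) f : betaF T idH f = f.
Proof. apply Vs_ext; intro A. rewrite beta_val by apply homeo_id. f_equal. apply alpha_id. Qed.

Definition deltaF {X} (T : topology X) (x : X) : Vs T :=
  exist (fun f : V T -> bool => forall a b c, addV a b c -> f c = xorb (f a) (f b))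
    (fun A : V T => proj1_sig A x) (fun a b c H => H x).

Definition vsxor {X} {T : topology X} (a b : Vs T) : Vs T.
Proof.
  refine (exist _ (fun A => xorb (proj1_sig a A) (proj1_sig b A)) _).
  intros p q r H. destruct a as [a Ha], b as [b Hb]; simpl.
  rewrite (Ha _ _ _ H), (Hb _ _ _ H).
  destruct (a p), (a q), (b p), (b q); reflexivity.
Defined.

Lemma vsxor_add {X} {T : topology X} (o y : Vs T) : addVs (vsxor o y) y o.
Proof. intro A; simpl. destruct (proj1_sig o A), (proj1_sig y A); reflexivity. Qed.

Definition v0 {X} (T : topology X) (HT : is_topology T) : V T.
Proof.
  refine (exist _ (fun _ => false) _). split.
  - eapply T_ext; [|apply (empty_open T HT)]. intro; split; [intros []|discriminate].
  - eapply T_ext; [|apply (proj1 HT)]. intro; split; auto.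
Defined.
Definition nb1 {X} {T : topology X} (ba : V T * V T) (g : HX X) :=
  forall x, proj1_sig (snd ba) (fst g x) = proj1_sig (fst ba) x.
Definition nb {X} {T : topology X} (P : list (V T * V T)) (g : HX X) :=
  forall ba, In ba P -> nb1 ba g.

Lemma nb1_alpha {X} (T : topology X) g (B A : V T) : is_homeo T g ->
  nb1 (B, A) g -> alphaF T g B = A.
Proof.
  intros Hg H. apply V_ext; intro x. rewrite alpha_val by auto. specialize (H (snd g x)); simpl in H. rewrite <- H.
  f_equal. rewrite (proj1 Hg). reflexivity.
Qed.

Lemma alpha_nb1 {X} (T : topology X) g (B A : V T) : is_homeo T g ->
  alphaF T g B = A -> nb1 (B, A) g.
Proof.
  intros Hg H x. simpl. rewrite <- H. rewrite alpha_val by auto. f_equal. apply (proj1 (proj2 Hg)).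
Qed.

Lemma nb1_alphainv {X} (T : topology X) g (B A : V T) : is_homeo T g ->
  nb1 (B, A) g -> alphaF T (invH g) A = B.
Proof.
  intros Hg H. apply V_ext; intro x. rewrite alpha_val by (apply homeo_inv; auto). apply H.
Qed.

Definition S1 {X} {T : topology X} (ba : V T * V T) (p : HX X) :=
  forall x, proj1_sig (fst ba) x = true -> proj1_sig (snd ba) (fst p x) = true.
Definition S2 {X} {T : topology X} (ba : V T * V T) (p : HX X) :=
  forall x, ~ proj1_sig (fst ba) x = true -> ~ proj1_sig (snd ba) (fst p x) = true.

Definition subbasic {X} (T : topology X) (B : set (HX X)) := exists K U, compact_set T K /\ T U /\
    forall p, B p <-> (forall x, K x -> U (fst p x)).

Lemma S1_sub {X} (T : topology X) (ba : V T * V T) : stone_space T -> subbasic T (S1 ba).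
Proof.
  intro HS. exists (fun x => proj1_sig (fst ba) x = true), (fun y => proj1_sig (snd ba) y = true).
  split; [|split].
  - apply clopen_compact; auto. apply (proj2_sig (fst ba)).
  - apply (proj2_sig (snd ba)).
  - intro; reflexivity.
Qed.

Lemma S2_sub {X} (T : topology X) (ba : V T * V T) : stone_space T -> subbasic T (S2 ba).
Proof.
  intro HS. exists (fun x => ~ proj1_sig (fst ba) x = true), (fun y => ~ proj1_sig (snd ba) y = true).
  split; [|split].
  - apply clopen_compact; auto. destruct (proj2_sig (fst ba)) as [H1 H2]. split; [exact H2|].
    eapply T_ext; [|exact H1]. intro x; split; [intros ? ?; contradiction|].
    intro H. destruct (proj1_sig (fst ba) x); auto; exfalso; apply H; discriminate.
  - apply (proj2 (proj2_sig (snd ba))).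
  - intro; reflexivity.
Qed.

Lemma nb1_S {X} {T : topology X} (ba : V T * V T) p : nb1 ba p <-> S1 ba p /\ S2 ba p.
Proof.
  unfold nb1, S1, S2. split.
  - intro H; split; intros x; rewrite H; auto.
  - intros [H1 H2] x. destruct (proj1_sig (fst ba) x) eqn:E.
    + apply H1; auto.
    + destruct (proj1_sig (snd ba) (fst p x)) eqn:E'; auto. exfalso.
      apply (H2 x); [rewrite E; discriminate | auto].
Qed.

Lemma gtop_intro {X} (T : topology X) (G : set (HX X)) : is_subgroup T G -> stone_space T ->
  forall U, (forall g, U g -> G g) ->
  (forall g, U g -> exists P : list (V T * V T), nb P g /\ forall g', G g' -> nb P g' -> U g') -> G_top T G U.
Proof.
  intros HG HS U HUG HU.
  set (W' := fun p : HX X => exists P : list (V T * V T), nb P p /\ forall g', G g' -> nb P g' -> U g').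
  split; auto. exists (fun p => is_homeo T p /\ W' p). split.
  - split; [intros y [? ?]; auto|]. exists W'. split.
    + intros p [P [HP1 HP2]].
      exists (flat_map (fun ba => [S1 ba; S2 ba]) P). split; [|split].
      * intros B HB. apply in_flat_map in HB. destruct HB as [ba [_ [<-|[<-|[]]]]].
        -- apply S1_sub; auto.
        -- apply S2_sub; auto.
      * intros B HB. apply in_flat_map in HB. destruct HB as [ba [Hba [<-|[<-|[]]]]];
          apply (nb1_S ba p); auto.
      * intros y Hy. exists P. split; auto. intros ba Hba. apply nb1_S. split; apply Hy;
          apply in_flat_map; exists ba; simpl; auto.
    + intros y Hy. split; [intros [_ ?]; auto | intro; split; auto].
  - intros y Gy. split.
    + intro Uy. split; [apply (proj1 HG); auto|]. apply HU; auto.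
    + intros [_ [P [HP1 HP2]]]. apply HP2; auto.
Qed.

Lemma gtop_key {X} (T : topology X) (G : set (HX X)) : is_subgroup T G -> stone_space T ->
  forall U, G_top T G U -> forall g, U g ->
  exists P : list (V T * V T), nb P g /\ forall g', G g' -> nb P g' -> U g'.
Proof.
  intros HG HS U [HUG [W [[HWh [W'' [HW'' HWW'']]] HUW]]] g Ug.
  assert (Gg : G g) by auto. assert (Hg : is_homeo T g) by (apply (proj1 HG); auto).
  assert (W''g : W'' g) by (apply HWW''; auto; apply HUW; auto).
  destruct (HW'' g W''g) as [l [Hl1 [Hl2 Hl3]]].
  assert (Hc : forall S, In S l -> exists ba : V T * V T, nb1 ba g /\ forall p, nb1 ba p -> S p).
  { intros S HS'. destruct (Hl1 S HS') as [K [O [HK [HO HSKO]]]].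
    destruct (clopen_between T HS K (fun y => O (fst g y)) HK) as [Bs [HBs [HKB HBO]]].
    - apply (proj1 (proj2 (proj2 Hg))); auto.
    - intros x Kx. apply (proj1 (HSKO g) (Hl2 S HS')); auto.
    - set (B := toV T Bs HBs). exists (B, alphaF T g B). split.
      + apply alpha_nb1; auto.
      + intros p Hp. apply HSKO. intros x Kx.
        assert (E : proj1_sig (alphaF T g B) (fst p x) = true).
        { specialize (Hp x). change (proj1_sig (alphaF T g B) (fst p x) = proj1_sig B x) in Hp.
          rewrite Hp. apply toV_val; auto. }
        rewrite alpha_val in E by auto.
        apply (proj1 (toV_val T Bs HBs _)) in E. apply HBO in E. rewrite (proj1 Hg) in E. exact E. }
  destruct (list_choice _ l Hc) as [P [HP1 HP2]].
  exists P. split.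
  - intros ba Hba. destruct (HP2 ba Hba) as [S [_ [? _]]]; auto.
  - intros g' Gg' Hg'. apply HUW; auto. apply HWW''. { apply (proj1 HG); auto. }
    apply Hl3. intros S HS'. destruct (HP1 S HS') as [ba [Hba [_ H]]]. apply H. apply Hg'; auto.
Qed.
Lemma bool_neg (b : bool) : b <> true <-> b = false.
Proof. destruct b; split; intro H; auto; try discriminate. exfalso; apply H; reflexivity. Qed.

Lemma alpha_nh {X} (T : topology X) g A : ~ is_homeo T g -> alphaF T g A = A.
Proof. intro H. unfold alphaF. destruct (excluded_middle_informative (is_homeo T g)); tauto. Qed.

Lemma beta_nh {X} (T : topology X) g f : ~ is_homeo T g -> betaF T g f = f.
Proof. intro H. unfold betaF. destruct (excluded_middle_informative (is_homeo T g)); tauto. Qed.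

Lemma nh_inv {X} (T : topology X) g : ~ is_homeo T g -> ~ is_homeo T (invH g).
Proof. intros H H'. apply H. rewrite <- (invH_invH g). apply homeo_inv. exact H'. Qed.

Lemma alpha_invr_all {X} (T : topology X) g A : alphaF T g (alphaF T (invH g) A) = A.
Proof.
  destruct (classic (is_homeo T g)) as [H|H]. - apply alpha_invr; auto.
  - rewrite (alpha_nh T (invH g)) by (apply nh_inv; auto). apply alpha_nh; auto.
Qed.
Lemma alpha_invl_all {X} (T : topology X) g A : alphaF T (invH g) (alphaF T g A) = A.
Proof. pose proof (alpha_invr_all T (invH g) A). rewrite invH_invH in H. exact H. Qed.

Lemma beta_invr_all {X} (T : topology X) g f : betaF T g (betaF T (invH g) f) = f.
Proof.
  destruct (classic (is_homeo T g)) as [H|H]. - apply beta_invr; auto.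
  - rewrite (beta_nh T (invH g)) by (apply nh_inv; auto). apply beta_nh; auto.
Qed.
Lemma beta_invl_all {X} (T : topology X) g f : betaF T (invH g) (betaF T g f) = f.
Proof. pose proof (beta_invr_all T (invH g) f). rewrite invH_invH in H. exact H. Qed.

Lemma beta_val_all {X} (T : topology X) g f A :
  proj1_sig (betaF T g f) A = proj1_sig f (alphaF T (invH g) A).
Proof.
  destruct (classic (is_homeo T g)) as [H|H]. - apply beta_val; auto.
  - rewrite beta_nh, alpha_nh; auto. apply nh_inv; auto.
Qed.

Lemma ia_proof {X} (T : topology X) g :
  let p := (alphaF T g, alphaF T (invH g)) in
    (forall y, fst p (snd p y) = y) /\ (forall y, snd p (fst p y) = y) /\
    is_hom addV (fst p) /\ is_hom addV (snd p) /\
    continuous (V_top T) (V_top T) (fst p) /\ continuous (V_top T) (V_top T) (snd p).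
Proof.
  simpl. repeat split.
  - apply alpha_invr_all. - apply alpha_invl_all. - apply alpha_hom. - apply alpha_hom.
Qed.

Definition iaF {X} (T : topology X) (g : HX X) : Aut (V_top T) addV :=
  exist _ (alphaF T g, alphaF T (invH g)) (ia_proof T g).

Definition VB {X} {T : topology X} (A : V T) (b : bool) : set (Vs T) := fun f => proj1_sig f A = b.

Lemma VB_sub {X} {T : topology X} (A : V T) b :
  exists (A' : V T) (b' : bool), forall f : Vs T, VB A b f <-> proj1_sig f A' = b'.
Proof. exists A, b; reflexivity. Qed.

Lemma beta_cont {X} (T : topology X) g : continuous (Vs_top T) (Vs_top T) (betaF T g).
Proof.
  intros W HW f Wf. destruct (HW _ Wf) as [l [Hl1 [Hl2 Hl3]]].
  exists (map (fun B => fun f' => B (betaF T g f')) l). split; [|split].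
  - intros B' HB'. apply in_map_iff in HB'. destruct HB' as [B [<- HB]].
    destruct (Hl1 B HB) as [A [b HAb]]. exists (alphaF T (invH g) A), b.
    intro f'. rewrite HAb, beta_val_all. reflexivity.
  - intros B' HB'. apply in_map_iff in HB'. destruct HB' as [B [<- HB]]. apply (Hl2 B HB).
  - intros y Hy. apply Hl3. intros B HB. apply (Hy (fun f' => B (betaF T g f'))).
    apply in_map_iff; eauto.
Qed.

Lemma ib_proof {X} (T : topology X) g :
  let p := (betaF T g, betaF T (invH g)) in
    (forall y, fst p (snd p y) = y) /\ (forall y, snd p (fst p y) = y) /\
    is_hom addVs (fst p) /\ is_hom addVs (snd p) /\
    continuous (Vs_top T) (Vs_top T) (fst p) /\ continuous (Vs_top T) (Vs_top T) (snd p).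
Proof.
  simpl. repeat split.
  - apply beta_invr_all. - apply beta_invl_all. - apply beta_hom. - apply beta_hom.
  - apply beta_cont. - apply beta_cont.
Qed.

Definition ibF {X} (T : topology X) (g : HX X) : Aut (Vs_top T) addVs :=
  exist _ (betaF T g, betaF T (invH g)) (ib_proof T g).

Lemma gen_basic {X} (T : topology X) (L : list (V T * bool)) :
  Vs_top T (fun f => forall ab, In ab L -> proj1_sig f (fst ab) = snd ab).
Proof.
  intros f Hf. exists (map (fun ab => VB (fst ab) (snd ab)) L). split; [|split].
  - intros B HB. apply in_map_iff in HB. destruct HB as [ab [<- _]]. apply VB_sub.
  - intros B HB. apply in_map_iff in HB. destruct HB as [ab [<- Hab]]. apply Hf; auto.
  - intros y Hy ab Hab. apply (Hy (VB (fst ab) (snd ab))). apply in_map_iff; eauto.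
Qed.

Lemma delta_cont {X} (T : topology X) : stone_space T -> continuous T (Vs_top T) (deltaF T).
Proof.
  intros HS W HW. destruct HS as [HT _]. apply open_local; auto. intros x Wx.
  destruct (HW _ Wx) as [l [Hl1 [Hl2 Hl3]]].
  assert (Hc : forall B, In B l -> exists ab : V T * bool, forall f : Vs T, B f <-> proj1_sig f (fst ab) = snd ab).
  { intros B HB. destruct (Hl1 B HB) as [A [b H]]. exists (A, b); auto. }
  destruct (list_choice _ l Hc) as [L [HL1 HL2]].
  exists (fun y => forall B, In B l -> B (deltaF T y)). split; [|split].
  - apply open_fin_inter with (l := map (fun B y => B (deltaF T y)) l) in HT.
    + eapply T_ext; [|exact HT]. intro y; split.
      * intros H B HB. apply (H (fun y => B (deltaF T y))). apply in_map_iff; eauto.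
      * intros H C HC. apply in_map_iff in HC. destruct HC as [B [<- HB]]. apply H; auto.
    + intros C HC. apply in_map_iff in HC. destruct HC as [B [<- HB]].
      destruct (HL1 B HB) as [[A b] [_ HAb]].
      eapply T_ext with (A := fun y => proj1_sig A y = b).
      * intro y. rewrite HAb. reflexivity.
      * destruct b. -- apply (proj2_sig A).
        -- eapply T_ext; [|apply (proj2 (proj2_sig A))]. intro y. rewrite bool_neg. reflexivity.
  - auto.
  - intros y Hy. apply Hl3; auto.
Qed.
Lemma aut_fg {Y} {TY : topology Y} {addR} (f : Aut TY addR) z : autf f (autg f z) = z.
Proof. destruct f as [p Hp]. apply (proj1 Hp). Qed.
Lemma aut_gf {Y} {TY : topology Y} {addR} (f : Aut TY addR) z : autg f (autf f z) = z.
Proof. destruct f as [p Hp]. apply (proj1 (proj2 Hp)). Qed.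
Lemma aut_homf {Y} {TY : topology Y} {addR} (f : Aut TY addR) : is_hom addR (autf f).
Proof. destruct f as [p Hp]. apply Hp. Qed.
Lemma aut_contf {Y} {TY : topology Y} {addR} (f : Aut TY addR) : continuous TY TY (autf f).
Proof. destruct f as [p Hp]. apply Hp. Qed.

Lemma HX_eq {X} (g h : HX X) : (forall x, fst g x = fst h x) -> (forall x, snd g x = snd h x) -> g = h.
Proof.
  destruct g as [g1 g2], h as [h1 h2]; simpl; intros H1 H2.
  f_equal; apply functional_extensionality; auto.
Qed.

Lemma homeo_eq_snd {X} (T : topology X) g h : is_homeo T g -> is_homeo T h ->
  (forall x, snd g x = snd h x) -> g = h.
Proof.
  intros Hg Hh H. apply HX_eq; auto. intro y.
  rewrite <- (proj1 Hh (fst g y)). rewrite <- H. rewrite (proj1 (proj2 Hg)). reflexivity.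
Qed.

Lemma homeo_eq_fst {X} (T : topology X) g h : is_homeo T g -> is_homeo T h ->
  (forall x, fst g x = fst h x) -> g = h.
Proof.
  intros Hg Hh H. apply HX_eq; auto. intro y.
  rewrite <- (proj1 (proj2 Hg) (snd h y)). rewrite H. rewrite (proj1 Hh). reflexivity.
Qed.

Lemma homeo_eq_alpha {X} (T : topology X) g h : stone_space T -> is_homeo T g -> is_homeo T h ->
  (forall A, alphaF T g A = alphaF T h A) -> g = h.
Proof.
  intros HS Hg Hh H. apply homeo_eq_snd with T; auto. intro x.
  destruct (classic (snd g x = snd h x)) as [E|E]; auto. exfalso.
  destruct (separation T HS _ _ E) as [A [H1 H2]].
  pose proof (f_equal (fun B => proj1_sig B x) (H A)) as E'. simpl in E'.
  rewrite !alpha_val in E' by auto. congruence.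
Qed.

Lemma delta_inj {X} (T : topology X) : stone_space T -> forall x y, deltaF T x = deltaF T y -> x = y.
Proof.
  intros HS x y E. destruct (classic (x = y)) as [?|N]; auto. exfalso.
  destruct (separation T HS _ _ N) as [A [H1 H2]].
  pose proof (f_equal (fun f : Vs T => proj1_sig f A) E) as E'. simpl in E'. congruence.
Qed.

Lemma discrete_compact_list {X} (T : topology X) (K : set (V T)) :
  compact_set (V_top T) K -> exists L, forall y, K y -> In y L.
Proof.
  intros HK. destruct (HK (fun S => exists y, S = (fun z => z = y))) as [l [Hl1 Hl2]].
  - intros; exact I.
  - intros x _. exists (fun z => z = x); eauto.
  - assert (Hc : forall S, In S l -> exists y : V T, S = (fun z => z = y)) by auto.
    destruct (list_choice _ l Hc) as [L [HL1 HL2]]. exists L.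
    intros y Ky. destruct (Hl2 y Ky) as [S [HS Sy]]. destruct (HL1 S HS) as [y' [Hy' ->]].
    subst; auto.
Qed.

Lemma part1 {X} (T : topology X) (G : set (HX X)) : stone_space T -> is_subgroup T G ->
  top_group_embedding G (G_top T G) (birkhoff (V_top T) addV zeroV) (iaF T).
Proof.
  intros HS HG. assert (HGh : forall g, G g -> is_homeo T g) by apply HG.
  pose proof (proj1 HS) as HT.
  split; [|split; [|split]].
  - intros g h Gg Gh y. unfold autf; simpl. apply alpha_mul; auto.
  - intros g h Gg Gh E. apply homeo_eq_alpha with T; auto. intro A.
    exact (f_equal (fun k => autf k A) E).
  - intros W HW. apply gtop_intro; auto. { intros g [? ?]; auto. }
    intros g [Gg Wg]. destruct (HW _ Wg) as [K [O [HK [[U0 [_ [HU0 HU0O]]] Hk]]]].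
    destruct (discrete_compact_list T K HK) as [L HL].
    exists (map (fun y => (y, alphaF T g y)) L). split.
    + intros ba Hba. apply in_map_iff in Hba. destruct Hba as [y [<- _]]. apply alpha_nb1; auto.
    + intros g' Gg' Hg'. split; auto. apply Hk. intros y Ky.
      assert (E : alphaF T g' y = alphaF T g y).
      { apply nb1_alpha; auto. apply Hg'. apply in_map_iff; eauto. }
      assert (Ov : O (v0 T HT)) by (apply HU0O; apply HU0; intro; reflexivity).
      split; exists (v0 T HT); split; auto; intro x; unfold autf, autg; simpl.
      * rewrite E, alpha_invl_all; reflexivity.
      * rewrite <- E, alpha_invl_all; reflexivity.
  - intros U HU.
    exists (fun k => exists (P : list (V T * V T)) g0, G g0 /\ U g0 /\ nb P g0 /\
              (forall g', G g' -> nb P g' -> U g') /\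
              forall ba, In ba P -> autf k (fst ba) = snd ba). split.
    + intros f [P [g0 [Gg0 [Ug0 [HP1 [HP2 HP3]]]]]].
      exists (fun y => exists ba, In ba P /\ fst ba = y), zeroV. split; [|split].
      * apply fin_compact with (L := map fst P). intros y [ba [? <-]]. apply in_map; auto.
      * exists zeroV. split; [exact I|]. split; auto.
      * intros k Hk. exists P, g0. repeat split; auto. intros ba Hba.
        destruct (Hk (fst ba)) as [[o [Zo Ho]] _]; eauto.
        assert (E : autg f (autf k (fst ba)) = fst ba).
        { apply V_ext; intro x. rewrite Ho, Zo. reflexivity. }
        rewrite <- (aut_fg f (autf k (fst ba))), E. auto.
    + intros g Gg. split.
      * intro Ug. destruct (gtop_key T G HG HS U HU g Ug) as [P [HP1 HP2]].
        exists P, g. repeat split; auto. intros [B A] Hba. unfold autf; simpl.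
        apply nb1_alpha; auto.
      * intros [P [g0 [Gg0 [Ug0 [HP1 [HP2 HP3]]]]]]. apply HP2; auto.
        intros [B A] Hba. apply alpha_nb1; auto. apply (HP3 _ Hba).
Qed.

Lemma part2 {X} (T : topology X) (G : set (HX X)) : stone_space T -> is_subgroup T G ->
  top_embedding T (Vs_top T) (deltaF T) /\
  forall g x, G g -> deltaF T (fst g x) = betaF T g (deltaF T x).
Proof.
  intros HS HG. split; [split; [|split]|].
  - apply delta_inj; auto.
  - apply delta_cont; auto.
  - intros U HU.
    exists (fun f => exists A : V T, (forall y, proj1_sig A y = true -> U y) /\ proj1_sig f A = true).
    split.
    + intros f [A [HA Hf]]. exists [VB A true]. split; [|split].
      * intros B [<-|[]]. apply VB_sub.
      * intros B [<-|[]]. exact Hf.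
      * intros y Hy. exists A; split; auto. apply (Hy (VB A true)); simpl; auto.
    + intro x; split.
      * intro Ux. destruct HS as [_ [_ [_ HZ]]]. destruct (HZ U x HU Ux) as [C [HC [Cx HCU]]].
        exists (toV T C HC). split.
        -- intros y Hy. apply HCU. apply (proj1 (toV_val T C HC y)). exact Hy.
        -- simpl. apply dec_true; auto.
      * intros [A [HA Hx]]. apply HA. exact Hx.
  - intros g x Gg. apply Vs_ext; intro A. rewrite beta_val_all. simpl.
    rewrite alpha_val. + reflexivity. + apply homeo_inv, HG; auto.
Qed.
Definition vs0 {X} (T : topology X) : Vs T :=
  exist (fun f : V T -> bool => forall a b c, addV a b c -> f c = xorb (f a) (f b))
    (fun _ => false) (fun a b c _ => eq_refl).

Lemma image_compact {X Y} (TX : topology X) (TY : topology Y) (d : X -> Y) :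
  continuous TX TY d -> compact TX -> compact_set TY (fun y => exists x, y = d x).
Proof.
  intros Hd HC F HF Hcov.
  destruct (HC (fun S => exists U, F U /\ S = (fun x => U (d x)))) as [l [Hl1 Hl2]].
  - intros S [U [FU ->]]. apply Hd; auto.
  - intros x _. destruct (Hcov (d x)) as [U [FU Ux]]; eauto.
    exists (fun x => U (d x)). split; eauto.
  - destruct (list_choice (fun S U => F U /\ S = (fun x => U (d x))) l Hl1) as [L [HL1 HL2]].
    exists L. split.
    + intros U HU. destruct (HL2 U HU) as [S [_ [? _]]]; auto.
    + intros y [x ->]. destruct (Hl2 x I) as [S [HS Sx]].
      destruct (HL1 S HS) as [U [HU [_ ->]]]. eauto.
Qed.

Lemma beta_act_cont {X} (T : topology X) (G : set (HX X)) : stone_space T -> is_subgroup T G ->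
  action_continuous G (G_top T G) (Vs_top T) (betaF T).
Proof.
  intros HS HG W HW g f [Gg Wgf]. assert (HGh : forall g, G g -> is_homeo T g) by apply HG.
  destruct (HW _ Wgf) as [l [Hl1 [Hl2 Hl3]]].
  destruct (list_choice (fun B (ab : V T * bool) => forall z : Vs T, B z <-> proj1_sig z (fst ab) = snd ab) l)
    as [L [HL1 HL2]].
  { intros B HB. destruct (Hl1 B HB) as [A [b H]]. exists (A, b); auto. }
  set (P := map (fun ab : V T * bool => (alphaF T (invH g) (fst ab), fst ab)) L).
  exists (fun g' => G g' /\ nb P g'),
    (fun f' => forall ab, In ab (map (fun ab : V T * bool => (alphaF T (invH g) (fst ab), snd ab)) L) ->
                proj1_sig f' (fst ab) = snd ab).
  split; [|split; [|split; [|split]]].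
  - apply gtop_intro; auto. { intros ? [? ?]; auto. }
    intros g0 [Gg0 H0]. exists P; split; auto.
  - apply gen_basic.
  - split; auto. intros [B A] Hba. unfold P in Hba. apply in_map_iff in Hba.
    destruct Hba as [[A' b] [E _]]. injection E as <- <-. intro x. simpl.
    rewrite alpha_val. + reflexivity. + apply homeo_inv; auto.
  - intros ab Hab. apply in_map_iff in Hab. destruct Hab as [[A b] [<- HAb]]. simpl.
    destruct (HL2 _ HAb) as [B [HB HBz]]. pose proof (proj1 (HBz _) (Hl2 B HB)) as H2. simpl in H2.
    rewrite beta_val_all in H2. exact H2.
  - intros g' f' [Gg' Hg'] Hf'. split; auto. apply Hl3. intros B HB.
    destruct (HL1 B HB) as [[A b] [HAb HBz]]. apply HBz. simpl.
    rewrite beta_val_all.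
    assert (E : alphaF T (invH g') A = alphaF T (invH g) A).
    { apply V_ext; intro x. rewrite alpha_val by (apply homeo_inv; auto).
      apply (Hg' (alphaF T (invH g) A, A)). unfold P. apply in_map_iff. exists (A, b); auto. }
    rewrite E. apply (Hf' (alphaF T (invH g) A, b)). apply in_map_iff. exists (A, b); auto.
Qed.

Lemma part3 {X} (T : topology X) (G : set (HX X)) : stone_space T -> is_subgroup T G ->
  top_group_embedding G (G_top T G) (birkhoff (Vs_top T) addVs zeroVs) (ibF T).
Proof.
  intros HS HG. assert (HGh : forall g, G g -> is_homeo T g) by apply HG.
  split; [|split; [|split]].
  - intros g h Gg Gh y. unfold autf; simpl. apply beta_mul; auto.
  - intros g h Gg Gh E. apply homeo_eq_fst with T; auto. intro x.
    apply (delta_inj T HS).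
    rewrite (proj2 (part2 T G HS HG) g x Gg), (proj2 (part2 T G HS HG) h x Gh).
    exact (f_equal (fun k => autf k (deltaF T x)) E).
  - intros W HW. apply gtop_intro; auto. { intros g [? ?]; auto. }
    intros g [Gg Wg]. destruct (HW _ Wg) as [K [O [HK [[U0 [HU0 [HzU0 HU0O]]] Hk]]]].
    assert (Z0 : U0 (vs0 T)) by (apply HzU0; intro; reflexivity).
    destruct (HU0 _ Z0) as [l [Hl1 [Hl2 Hl3]]].
    destruct (list_choice (fun B (A : V T) => forall z : Vs T, B z <-> proj1_sig z A = false) l)
      as [LA [HL1 HL2]].
    { intros B HB. destruct (Hl1 B HB) as [A [b H]]. exists A. intro z. rewrite H.
      assert (b = false). { pose proof (proj1 (H _) (Hl2 B HB)) as H2. simpl in H2. auto. }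
      subst; reflexivity. }
    exists (map (fun A => (A, alphaF T g A)) LA). split.
    + intros ba Hba. apply in_map_iff in Hba. destruct Hba as [A [<- _]]. apply alpha_nb1; auto.
    + intros g' Gg' Hg'. split; auto.
      assert (E : forall A, In A LA -> alphaF T g' A = alphaF T g A).
      { intros A HA. apply nb1_alpha; auto. apply Hg'. apply in_map_iff; eauto. }
      assert (HO : forall o : Vs T, (forall A, In A LA -> proj1_sig o A = false) -> O o).
      { intros o Ho. apply HU0O. apply Hl3. intros B HB.
        destruct (HL1 B HB) as [A [HA HBA]]. apply HBA. auto. }
      apply Hk. intros y Ky. split.
      * exists (vsxor (autg (ibF T g) (autf (ibF T g') y)) y). split; [|apply vsxor_add].
        apply HO. intros A HA. unfold autf, autg; simpl.
        rewrite !beta_val_all, invH_invH, <- (E A HA), alpha_invl_all.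
        destruct (proj1_sig y A); reflexivity.
      * exists (vsxor (autg (ibF T g') (autf (ibF T g) y)) y). split; [|apply vsxor_add].
        apply HO. intros A HA. unfold autf, autg; simpl.
        rewrite !beta_val_all, invH_invH, (E A HA), alpha_invl_all.
        destruct (proj1_sig y A); reflexivity.
  - intros U HU.
    exists (fun k => exists (P : list (V T * V T)) g0, G g0 /\ U g0 /\ nb P g0 /\
              (forall g', G g' -> nb P g' -> U g') /\
              forall x ba, In ba P ->
                proj1_sig (autg (ibF T g0) (autf k (deltaF T x))) (fst ba) = proj1_sig (fst ba) x).
    split.
    + intros f [P [g0 [Gg0 [Ug0 [HP1 [HP2 HP3]]]]]].
      set (h := fun z => autg (ibF T g0) (autf f z)).
      assert (Hh : is_hom addVs h).
      { intros a b c H. unfold h, autg; simpl. apply beta_hom. apply (aut_homf f). auto. }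
      exists (fun y => exists x, y = deltaF T x),
        (fun o => forall ba, In ba P -> proj1_sig (h o) (fst ba) = false).
      split; [|split].
      * apply (image_compact T). -- apply delta_cont; auto. -- apply HS.
      * exists (fun o => forall ba, In ba P -> proj1_sig (h o) (fst ba) = false).
        split; [|split; [|auto]].
        -- pose proof (gen_basic T (map (fun ba : V T * V T => (fst ba, false)) P)) as Hb.
           apply (beta_cont T (invH g0)) in Hb. apply (aut_contf f) in Hb.
           eapply T_ext; [|exact Hb]. intro o; simpl. split.
           ++ intros H ba Hba. apply (H (fst ba, false)). apply in_map_iff; eauto.
           ++ intros H ab Hab. apply in_map_iff in Hab. destruct Hab as [ba [<- Hba]]. apply H; auto.
        -- intros z Hz ba Hba.
           assert (Ez : addVs z z z) by (intro A; rewrite Hz; reflexivity).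
           pose proof (Hh _ _ _ Ez (fst ba)) as E2. destruct (proj1_sig (h z) (fst ba)); auto.
      * intros k Hk. exists P, g0. repeat split; auto. intros x ba Hba.
        destruct (Hk (deltaF T x)) as [[o [Oo Ho]] _]; [eauto|].
        pose proof (Hh _ _ _ Ho (fst ba)) as E2.
        unfold h in E2. rewrite aut_fg in E2. rewrite E2.
        pose proof (Oo ba Hba) as Ob. unfold h in Ob. rewrite Ob, (HP3 x ba Hba). reflexivity.
    + intros g Gg. split.
      * intro Ug. destruct (gtop_key T G HG HS U HU g Ug) as [P [HP1 HP2]].
        exists P, g. repeat split; auto. intros x ba Hba. rewrite aut_gf. reflexivity.
      * intros [P [g0 [Gg0 [Ug0 [HP1 [HP2 HP3]]]]]]. apply HP2; auto.
        intros [B A] Hba. apply alpha_nb1; auto.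
        rewrite <- (nb1_alpha T g0 B A (HGh g0 Gg0) (HP1 _ Hba)).
        assert (E : alphaF T (invH g) (alphaF T g0 B) = B).
        { apply V_ext; intro x. pose proof (HP3 x _ Hba) as H. simpl in H.
          unfold autf, autg in H; simpl in H. rewrite !beta_val_all, invH_invH in H.
          simpl in H. exact H. }
        rewrite <- E at 1. apply alpha_invr_all.
Qed.
Lemma alpha_act_cont {X} (T : topology X) (G : set (HX X)) : stone_space T -> is_subgroup T G ->
  action_continuous G (G_top T G) (V_top T) (alphaF T).
Proof.
  intros HS HG W HW g y [Gg Wgy]. assert (HGh : forall g, G g -> is_homeo T g) by apply HG.
  exists (fun g' => G g' /\ nb [(y, alphaF T g y)] g'), (fun z => z = y).
  split; [|split; [exact I|split; [|split; [reflexivity|]]]].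
  - apply gtop_intro; auto. { intros ? [? ?]; auto. }
    intros g0 [? ?]. exists [(y, alphaF T g y)]; split; auto.
  - split; auto. intros ba [<-|[]]. apply alpha_nb1; auto.
  - intros g' y' [Gg' Hg'] ->. split; auto.
    rewrite (nb1_alpha T g' y (alphaF T g y) (HGh g' Gg')); auto. apply Hg'; simpl; auto.
Qed.

Lemma tau_nb {X} (T : topology X) (G : set (HX X)) (tau : topology (HX X)) :
  is_subgroup T G -> topology_on G tau -> action_continuous G tau (V_top T) (alphaF T) ->
  forall (P : list (V T * V T)) g, G g -> nb P g ->
  exists Vg, tau Vg /\ Vg g /\ forall g', Vg g' -> G g' /\ nb P g'.
Proof.
  intros HG [Hsub [HtG [Hint _]]] Hca. assert (HGh : forall g, G g -> is_homeo T g) by apply HG.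
  induction P as [|[B A] P IH]; intros g Gg Hg.
  - exists G. split; auto. split; auto. intros g' ?; split; auto. intros ? [].
  - destruct (IH g Gg) as [V0 [HV0 [V0g HV0']]]. { intros ba Hba; apply Hg; simpl; auto. }
    destruct (Hca (fun y => y = A) I g B) as [U1 [U2 [HU1 [_ [U1g [U2B HU]]]]]].
    { split; auto. apply nb1_alpha; auto. apply Hg; simpl; auto. }
    exists (fun x => V0 x /\ U1 x). split; [apply Hint; auto|]. split; [split; auto|].
    intros g' [V0g' U1g']. destruct (HV0' g' V0g') as [Gg' Hg']. split; auto.
    intros ba [<-|Hba]; auto. apply alpha_nb1; auto. apply (HU g' B U1g' U2B).
Qed.

Lemma part4 {X} (T : topology X) (G : set (HX X)) : stone_space T -> is_subgroup T G ->
  t_exact_birepresentation G (G_top T G) (V_top T) (Vs_top T) addV addVs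
    wpair (alphaF T) (betaF T).
Proof.
  intros HS HG. assert (HGh : forall g, G g -> is_homeo T g) by apply HG.
  split; [split; [|split; [|split; [|split]]]|split].
  - split; [apply alpha_id|split].
    + intros; apply alpha_mul; auto.
    + intros g Gg. split; [apply alpha_hom|]. intros W _; exact I.
  - split; [apply beta_id|split].
    + intros; apply beta_mul; auto.
    + intros g Gg. split; [apply beta_hom|apply beta_cont].
  - apply alpha_act_cont; auto.
  - apply beta_act_cont; auto.
  - intros g A f Gg. unfold wpair. rewrite beta_val_all, alpha_invl_all. reflexivity.
  - intros g Gg Ha _. apply homeo_eq_alpha with T; auto. { apply homeo_id. }
    intro A. rewrite Ha, alpha_id. reflexivity.
  - intros tau Htop _ _ [U [TGU NtU]] [Hca _]. apply NtU.
    destruct Htop as [Hon _]. pose proof Hon as [Hsub [HtG [Hint Hun]]].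
    eapply T_ext with (A := fun x => exists V, (tau V /\ forall y, V y -> U y) /\ V x).
    + intro g; split.
      * intros [V0 [[_ H] ?]]; auto.
      * intro Ug. destruct (gtop_key T G HG HS U TGU g Ug) as [P [HP1 HP2]].
        assert (Gg : G g) by (apply (proj1 TGU); auto).
        destruct (tau_nb T G tau HG Hon Hca P g Gg HP1) as [Vg [HVg [Vgg HVg']]].
        exists Vg. split; auto. split; auto. intros y Vy. destruct (HVg' y Vy); auto.
    + apply Hun. intros V0 [? _]; auto.
Qed.

Theorem lemma4p3 (X : Type) (T : topology X) (G : set (HX X)) :
  stone_space T -> is_subgroup T G ->
  exists alpha : HX X -> V T -> V T,
    (forall g A x, G g -> proj1_sig (alpha g A) x = proj1_sig A (snd g x)) /\
  exists beta : HX X -> Vs T -> Vs T,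
    (forall g f A, G g -> proj1_sig (beta g f) A = proj1_sig f (alpha (invH g) A)) /\
  exists delta : X -> Vs T,
    (forall x A, proj1_sig (delta x) A = proj1_sig A x) /\
  (exists ia : HX X -> Aut (V_top T) addV,
     (forall g A, G g -> autf (ia g) A = alpha g A) /\
     top_group_embedding G (G_top T G) (birkhoff (V_top T) addV zeroV) ia) /\
  (top_embedding T (Vs_top T) delta /\
   forall g x, G g -> delta (fst g x) = beta g (delta x)) /\
  (action_continuous G (G_top T G) (Vs_top T) beta /\
   exists ib : HX X -> Aut (Vs_top T) addVs,
     (forall g f, G g -> autf (ib g) f = beta g f) /\
     top_group_embedding G (G_top T G) (birkhoff (Vs_top T) addVs zeroVs) ib) /\
  t_exact_birepresentation G (G_top T G) (V_top T) (Vs_top T) addV addVs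
    wpair alpha beta.
Proof.
  intros HS HG. assert (HGh : forall g, G g -> is_homeo T g) by apply HG.
  exists (alphaF T). split. { intros; apply alpha_val; auto. }
  exists (betaF T). split. { intros; apply beta_val_all. }
  exists (deltaF T). split. { intros; reflexivity. }
  split; [|split; [|split]].
  - exists (iaF T). split; [intros; reflexivity|]. apply part1; auto.
  - apply part2; auto.
  - split; [apply beta_act_cont; auto|]. exists (ibF T). split; [intros; reflexivity|].
    apply part3; auto.
  - apply part4; auto.
Qed.
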